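(* Let $\mathrm{k}\ge1$ and consider real coefficients $a_j$ ($0\le j\le\mathrm{k}-1$), $b_j$ ($0\le j\le\mathrm{k}$), $c_j$ ($0\le j\le\mathrm{k}-1$) with $b_0>0$. Then no such $\mathrm{k}$-step implicit-explicit multistep method has consistency order $\mathrm{k}+1$; that is, the order conditions $$\sum_{j=0}^{\mathrm{k}-1}a_j=1,\qquad \sum_{j=0}^{\mathrm{k}-1}a_j\,\partial_\tau t_{n-j}^{\ell}=\ell\sum_{j=0}^{\mathrm{k}}b_j\,t_{n-j}^{\ell-1}=\ell\sum_{j=0}^{\mathrm{k}-1}c_j\,t_{n-j-1}^{\ell-1}\quad\text{for }1\le\ell\le\mathrm{k}+1,$$ cannot all hold (for $n\ge\mathrm{k}$ on a uniform mesh $t_j=j\tau$).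
   Context: The method in question is $\sum_{j=0}^{\mathrm{k}-1}a_j\partial_\tau u^{n-j}+\varpi\sum_{j=0}^{\mathrm{k}}b_j\mathcal{L}u^{n-j}=\sum_{j=0}^{\mathrm{k}-1}c_j\mathcal{F}(u^{n-j-1})$, where $\partial_\tau v^m=(v^m-v^{m-1})/\tau$; in the order conditions $\partial_\tau t^\ell_m=(t_m^\ell-t_{m-1}^\ell)/\tau$. The implicit part means $b_0>0$. *)

(* Defs.v *)
From HB Require Import structures.
From mathcomp Require Import all_boot all_order all_algebra.
From mathcomp Require Import reals.
Set Implicit Arguments. Unset Strict Implicit. Unset Printing Implicit Defensive.
Import Order.TTheory GRing.Theory Num.Theory.
Local Open Scope ring_scope.

Definition tmesh {R : realType} (tau : R) (m : nat) : R := m%:R * tau.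

(* Backward difference quotient of t^l at node m:
   partial_tau t^l_m = (t_m^l - t_{m-1}^l) / tau  (used only for m >= 1). *)
Definition dtau_pow {R : realType} (tau : R) (l m : nat) : R :=
  (tmesh tau m ^+ l - tmesh tau m.-1 ^+ l) / tau.

(* Order conditions for order k+1 of the k-step IMEX method
   sum_{j<k} a_j d_tau u^{n-j} + w sum_{j<=k} b_j L u^{n-j}
     = sum_{j<k} c_j F(u^{n-j-1}),  at step n on the mesh of width tau. *)
Definition imex_order_conditions {R : realType} (k : nat)
    (a b c : nat -> R) (tau : R) (n : nat) : Prop :=
  \sum_(j < k) a j = 1 /\
  forall l : nat, (1 <= l <= k.+1)%N ->
    \sum_(j < k) a j * dtau_pow tau l (n - j)
      = l%:R * \sum_(j < k.+1) b j * tmesh tau (n - j) ^+ l.-1 /\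
    l%:R * \sum_(j < k.+1) b j * tmesh tau (n - j) ^+ l.-1
      = l%:R * \sum_(j < k) c j * tmesh tau (n - j - 1) ^+ l.-1.

(* Main.v *)
Require Import Defs.
From HB Require Import structures.
From mathcomp Require Import all_boot all_order all_algebra.
From mathcomp Require Import reals.
From mathcomp Require Import zify.
Import Order.TTheory GRing.Theory Num.Theory.
Local Open Scope ring_scope.

Lemma size_ie k : size (index_enum 'I_k) = k.
Proof. by rewrite -[index_enum _]enumT size_enum_ord. Qed.

Theorem proposition3p2 (R : realType) (k : nat) (hk : (1 <= k)%N)
    (a b c : nat -> R) (hb0 : 0 < b 0%N) (tau : R) (htau : 0 < tau) :
  ~ (forall n : nat, (k <= n)%N -> imex_order_conditions k a b c tau n).
Proof.
move=> H; have [_ Hl] := H k (leqnn k).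
have P : forall m, (m <= k)%N ->
  \sum_(j < k.+1) b j * tmesh tau (k - j) ^+ m
  = \sum_(j < k) c j * tmesh tau (k - j - 1) ^+ m.
  move=> m hm; have hm' : (1 <= m.+1 <= k.+1)%N by rewrite /= ltnS hm.
  have [_ E] := Hl m.+1 hm'.
  by apply: (mulfI _ E); rewrite pnatr_eq0.
set t := tmesh tau.
have L : forall q : {poly R}, (size q <= k.+1)%N ->
  \sum_(j < k.+1) b j * q.[t (k - j)%N] = \sum_(j < k) c j * q.[t (k - j - 1)%N].
  move=> q hq.
  under eq_bigr => j _ do rewrite (horner_coef_wide _ hq) big_distrr.
  under [RHS]eq_bigr => j _ do rewrite (horner_coef_wide _ hq) big_distrr.
  rewrite exchange_big [RHS]exchange_big; apply: eq_bigr => i _.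
  have E := P i (ltn_ord i).
  transitivity (\sum_(j < k.+1) q`_i * (b j * t (k - j)%N ^+ i)).
    by apply: eq_bigr => j _; rewrite mulrCA.
  rewrite -mulr_sumr E mulr_sumr; apply: eq_bigr => j _; by rewrite mulrCA.
pose q := \prod_(i < k) ('X - (t (k - i - 1)%N)%:P).
have hq : (size q <= k.+1)%N by rewrite size_prod_XsubC size_ie.
have Z : forall j : 'I_k, q.[t (k - j - 1)%N] = 0.
  move=> j; rewrite /q horner_prod (bigD1 j) //= !hornerE subrr mul0r //.
have E := L q hq.
have E0 : \sum_(j < k) c j * q.[t (k - j - 1)%N] = 0.
  by apply: big1 => j _; rewrite Z mulr0.
move: E; rewrite E0 big_ord_recl.
rewrite big1 ?addr0; last first.
  move=> j _; have := Z j; have -> : (k - lift ord0 j = k - j - 1)%N by rewrite /= /bump /=; lia.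
  move=> ->.
  by rewrite mulr0.
rewrite subn0 => /eqP; rewrite mulf_eq0 (gt_eqF hb0) /= /q horner_prod.
rewrite prodf_seq_eq0 => /hasP [i _ /=]; rewrite !hornerE /t /tmesh.
rewrite -mulrBl mulf_eq0 (gt_eqF htau) orbF subr_eq0 eqr_nat => /eqP.
have := ltn_ord i; lia.
Qed.
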